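(* Let $d, k_1, \ldots, k_d$ be positive integers, $n=k_1+\cdots+k_d$, and let $A$ be the $n\times n$ block matrix \[ A=\begin{pmatrix} A_1 & a_{12}\mathbf{1} & \cdots & a_{1d}\mathbf{1} \\ a_{21}\mathbf{1} & A_2 & \cdots & a_{2d}\mathbf{1} \\ \vdots & \vdots & \ddots & \vdots \\ a_{d1}\mathbf{1} & a_{d2}\mathbf{1} & \cdots & A_d \end{pmatrix}, \] where each $A_i$ is a normal, $r_{A_i}$-row regular complex $k_i\times k_i$ matrix and each $a_{ij}\mathbf{1}$ ($i\ne j$) is the $k_i\times k_j$ matrix all of whose entries equal $a_{ij}\in\mathbb{C}$. Let $\overline{A}$ be the $d\times d$ matrix with diagonal entries $\overline{A}_{ii}=r_{A_i}$ and off-diagonal entries $\overline{A}_{ij}=a_{ij}k_j$ for $i\neq j$. For each $i$, let $r_{A_i}=\lambda_1^{A_i},\lambda_2^{A_i},\ldots,\lambda_{k_i}^{A_i}$ be the eigenvalues of $A_i$ listed with multiplicity (so the multiset $\{\lambda_2^{A_i},\dots,\lambda_{k_i}^{A_i}\}$ is the spectrum of $A_i$ with one copy of $r_{A_i}$ removed). Then the characteristic polynomials satisfy \[ p_{A}(t)= p_{\overline{A}}(t) \prod_{\substack{1 \leq i \leq d, \\ 2 \leq j \leq k_i}} (t-\lambda_{j}^{A_i}), \] equivalently $p_A(t)\prod_{i=1}^d (t-r_{A_i}) = p_{\overline A}(t)\prod_{i=1}^d p_{A_i}(t)$.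
   Context: A complex square matrix $M$ is normal if $MM^*=M^*M$ ($M^*$ the conjugate transpose), and $r_M$-row regular if every row of $M$ sums to $r_M$ (for normal row regular $M$, $r_M$ is an eigenvalue of $M$). $p_M(t)=\det(tI-M)$ denotes the characteristic polynomial. *)

(* Defs.v *)
From HB Require Import structures.
From mathcomp Require Import all_boot all_order all_algebra.
Set Implicit Arguments. Unset Strict Implicit. Unset Printing Implicit Defensive.
Import Order.TTheory GRing.Theory Num.Theory.
Local Open Scope ring_scope.

Definition conjtr (C : numClosedFieldType) (m : nat) (M : 'M[C]_m) : 'M[C]_m :=
  map_mx Num.conj (M^T).

Definition normal_mx (C : numClosedFieldType) (m : nat) (M : 'M[C]_m) : Prop :=
  M *m conjtr M = conjtr M *m M.

Definition row_regular (C : numClosedFieldType) (m : nat) (M : 'M[C]_m) (r : C) : Prop :=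
  forall i : 'I_m, \sum_(j < m) M i j = r.

Definition block_A (C : numClosedFieldType) (d : nat) (k : 'I_d -> nat)
  (A : forall i : 'I_d, 'M[C]_(k i)) (a : 'I_d -> 'I_d -> C) : 'M[C]_(\sum_(i < d) k i) :=
  \mxdiag_(i < d) A i
  + \mxblock_(i < d, j < d) (const_mx (if i == j then 0 else a i j) : 'M[C]_(k i, k j)).

Definition quot_A (C : numClosedFieldType) (d : nat) (k : 'I_d -> nat)
  (r : 'I_d -> C) (a : 'I_d -> 'I_d -> C) : 'M[C]_d :=
  \matrix_(i < d, j < d) (if i == j then r i else a i j * (k j)%:R).

(* Main.v *)
Require Import Defs.
From HB Require Import structures.
From mathcomp Require Import all_boot all_order all_algebra.
Set Implicit Arguments. Unset Strict Implicit. Unset Printing Implicit Defensive.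
Import Order.TTheory GRing.Theory Num.Theory.
Local Open Scope ring_scope.

Definition Emx (R : pzRingType) d (k : 'I_d -> nat) : 'M[R]_(\sum_(i < d) k i, d) :=
  \mxcol_i (\matrix_(p < k i, j < d) (i == j)%:R).
Definition Etmx (R : pzRingType) d (k : 'I_d -> nat) : 'M[R]_(d, \sum_(i < d) k i) :=
  \mxrow_j (\matrix_(i < d, q < k j) (i == j)%:R).
Definition Atl (R : pzRingType) d (a : 'I_d -> 'I_d -> R) : 'M[R]_d :=
  \matrix_(i, j) (if i == j then 0 else a i j).

Lemma blockA_decomp (C : numClosedFieldType) (d : nat) (k : 'I_d -> nat)
  (A : forall i : 'I_d, 'M[C]_(k i)) (a : 'I_d -> 'I_d -> C) :
  block_A A a = \mxdiag_i A i + Emx C k *m (Atl a *m Etmx C k).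
Proof.
rewrite /block_A /Emx /Etmx mul_mxrow mul_mxcol_mxrow; congr (_ + _).
apply: eq_mxblock => i j; apply/matrixP => p q; rewrite !mxE.
rewrite (bigD1 i) //= big1 => [|l /negPf nl]; last by rewrite mxE eq_sym nl mul0r.
rewrite mxE eqxx mul1r addr0 mxE (bigD1 j) //= big1 => [|m /negPf nm]; last first.
  by rewrite mxE nm mulr0.
by rewrite !mxE eqxx mulr1 addr0.
Qed.

Lemma DE_lem (C : numClosedFieldType) (d : nat) (k : 'I_d -> nat)
  (A : forall i : 'I_d, 'M[C]_(k i)) (r : 'I_d -> C) (t : C) :
  (forall i, row_regular (A i) (r i)) ->
  \mxdiag_i (t%:M - A i) *m Emx C k = Emx C k *m diag_mx (\row_i (t - r i)).
Proof.
move=> reg; rewrite /Emx mul_mxdiag_mxcol mxcol_mul; apply: eq_mxcol => i.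
apply/matrixP => p j; rewrite mul_mx_diag !mxE.
under eq_bigr do rewrite !mxE.
rewrite -big_distrl /= sumrB (reg i p) (bigD1 p) //= big1 => [|q /negPf nq]; last first.
  by rewrite eq_sym nq mulr0n.
rewrite eqxx mulr1n addr0; case: eqP => [->|_]; first by rewrite mulr1 mul1r.
by rewrite mulr0 mul0r.
Qed.

Lemma EtE_lem (C : numClosedFieldType) (d : nat) (k : 'I_d -> nat) :
  Etmx C k *m Emx C k = diag_mx (\row_i (k i)%:R).
Proof.
rewrite /Etmx /Emx mul_mxrow_mxcol; apply/matrixP => l j; rewrite summxE !mxE.
rewrite (bigD1 l) //= big1 => [|i nli]; last first.
  rewrite mxE big1 // => q _; rewrite !mxE eq_sym (negPf nli) mul0r //.
rewrite mxE addr0; under eq_bigr do rewrite !mxE eqxx mul1r.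
by rewrite sumr_const card_ord; case: eqP; rewrite ?mulr1n ?mulr0n // mul0rn.
Qed.

Lemma quot_decomp (C : numClosedFieldType) (d : nat) (k : 'I_d -> nat)
  (r : 'I_d -> C) (a : 'I_d -> 'I_d -> C) (t : C) :
  t%:M - quot_A k r a =
  diag_mx (\row_i (t - r i)) - Atl a *m diag_mx (\row_i (k i)%:R).
Proof.
apply/matrixP => i j; rewrite mul_mx_diag !mxE.
case: eqP => [->|_]; first by rewrite mulr1n mul0r subr0.
by rewrite !mulr0n.
Qed.

Lemma det_castmx_sq (R : comNzRingType) m n (e : m = n) (M : 'M[R]_m) :
  \det (castmx (e, e) M) = \det M.
Proof. by case: n / e; rewrite castmx_id. Qed.

Lemma det_mxdiag (R : comNzRingType) (p : nat) (p_ : 'I_p -> nat)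
  (B_ : forall i, 'M[R]_(p_ i)) : \det (\mxdiag_i B_ i) = \prod_i \det (B_ i).
Proof.
elim: p p_ B_ => [|p IH] p_ B_.
  rewrite [RHS]big_ord0; move: (\mxdiag_i B_ i); rewrite big_ord0 => M.
  by rewrite det_mx00.
by rewrite mxdiag_recl det_castmx_sq det_ublock IH big_ord_recl.
Qed.

Lemma sylvester_det (R : comNzRingType) n d (X : 'M[R]_(n, d)) (Y : 'M[R]_(d, n)) :
  \det (1%:M - X *m Y) = \det (1%:M - Y *m X).
Proof.
have e1 : block_mx 1%:M X Y 1%:M =
   block_mx 1%:M 0 Y 1%:M *m block_mx 1%:M X 0 (1%:M - Y *m X).
  rewrite mulmx_block !mul1mx ?mul0mx ?mulmx1 ?mulmx0 ?addr0 ?add0r.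
  by rewrite [Y *m X + _]addrC subrK.
have e2 : block_mx 1%:M X Y 1%:M =
   block_mx (1%:M - X *m Y) X 0 1%:M *m block_mx 1%:M 0 Y 1%:M.
  rewrite mulmx_block !mul1mx ?mul0mx ?mulmx1 ?mulmx0 ?addr0 ?add0r.
  by rewrite -addrA addNr addr0.
have := congr1 determinant e1; rewrite e2 !det_mulmx !det_lblock !det_ublock.
by rewrite !det1 !mul1r !mulr1 => ->.
Qed.

Lemma pointwise (C : numClosedFieldType) (d : nat) (k : 'I_d -> nat)
  (A : forall i : 'I_d, 'M[C]_(k i)) (r : 'I_d -> C) (a : 'I_d -> 'I_d -> C) (t : C) :
  (forall i, row_regular (A i) (r i)) -> (forall i, t != r i) ->
  \det (t%:M - block_A A a) * \prod_i (t - r i)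
  = (\prod_i \det (t%:M - A i)) * \det (t%:M - quot_A k r a).
Proof.
move=> reg neq.
set E := Emx C k; set Et := Etmx C k; set T := diag_mx (\row_i (t - r i)).
set S := diag_mx (\row_i (t - r i)^-1); pose K : 'M[C]_d := diag_mx (\row_i (k i)%:R).
set Dm := \mxdiag_i (t%:M - A i).
have ST : S *m T = 1%:M.
  apply/matrixP => i j; rewrite mul_diag_mx !mxE.
  case: eqP => [->|_]; last by rewrite !mulr0n mulr0.
  by rewrite !mulr1n mulVf // subr_eq0.
have TS : T *m S = 1%:M.
  apply/matrixP => i j; rewrite mul_diag_mx !mxE.
  case: eqP => [->|_]; last by rewrite !mulr0n mulr0.
  by rewrite !mulr1n mulfV // subr_eq0.
have DES : Dm *m (E *m S) = E by rewrite mulmxA (DE_lem t reg) -mulmxA TS mulmx1.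
have h1 : t%:M - block_A A a = Dm *m (1%:M - (E *m S) *m (Atl a *m Et)).
  rewrite mulmxBr mulmx1 !mulmxA -(mulmxA Dm) DES -mulmxA blockA_decomp /Dm mxdiagB mxdiagZ.
  by rewrite opprD addrA.
have h2 : t%:M - quot_A k r a = (1%:M - Atl a *m K *m S) *m T.
  by rewrite quot_decomp mulmxBl mul1mx -mulmxA ST mulmx1.
rewrite h1 h2 !det_mulmx sylvester_det det_mxdiag det_diag.
rewrite mulmxA -(mulmxA _ Et) /Et /E EtE_lem -/K.
have -> : \prod_i (\row_i0 (t - r i0)) 0 i = \prod_i (t - r i).
  by apply: eq_bigr => i _; rewrite mxE.
by rewrite mulrA.
Qed.

Lemma horner_char_poly (R : comNzRingType) n (M : 'M[R]_n) t :
  (char_poly M).[t] = \det (t%:M - M).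
Proof.
rewrite /char_poly -horner_evalE -det_map_mx; congr (\det _).
apply/matrixP => i j; rewrite !mxE /= horner_evalE.
by rewrite hornerD hornerN hornerMn hornerX hornerC.
Qed.

Lemma poly_eq0_everywhere (C : numFieldType) (p : {poly C}) :
  (forall t, p.[t] = 0) -> p = 0.
Proof.
move=> H; apply: (@roots_geq_poly_eq0 _ p [seq i%:R | i <- iota 0 (size p)]).
- by apply/allP => x _; apply/eqP; rewrite H.
- by rewrite map_inj_uniq ?iota_uniq // => x y /eqP; rewrite eqr_nat => /eqP.
- by rewrite size_map size_iota.
Qed.

Theorem mainTheorem4 (C : numClosedFieldType) (d : nat) (k : 'I_d -> nat)
  (A : forall i : 'I_d, 'M[C]_(k i)) (r : 'I_d -> C) (a : 'I_d -> 'I_d -> C)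
  (lam : 'I_d -> seq C) :
  (0 < d)%N ->
  (forall i, (0 < k i)%N) ->
  (forall i, normal_mx (A i)) ->
  (forall i, row_regular (A i) (r i)) ->
  (* eigenvalues of A i with multiplicity: r i, lambda_2, ..., lambda_{k i} *)
  (forall i, char_poly (A i) = \prod_(l <- r i :: lam i) ('X - l%:P)) ->
  char_poly (block_A A a)
    = char_poly (quot_A k r a) * \prod_(i < d) \prod_(l <- lam i) ('X - l%:P).
Proof.
move=> _ _ _ reg hc.
pose Rp : {poly C} := \prod_(i < d) ('X - (r i)%:P).
have Rn0 : Rp != 0 by apply: monic_neq0; apply: monic_prod_XsubC.
have P0 : char_poly (block_A A a) * Rp
          - char_poly (quot_A k r a) * \prod_i char_poly (A i) = 0.
  set P := (X in X = 0).
  have : P * Rp = 0.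
    apply: poly_eq0_everywhere => t; rewrite hornerM.
    have [/existsP [i /eqP ti]|] := boolP [exists i, t == r i].
      rewrite /Rp horner_prod (bigD1 i) //= hornerXsubC ti subrr mul0r.
      by rewrite mulr0.
    rewrite negb_exists => /forallP nt.
    rewrite /P hornerD hornerN !hornerM !horner_char_poly /Rp !horner_prod.
    under eq_bigr do rewrite hornerXsubC.
    under [X in _ - _ * X]eq_bigr do rewrite horner_char_poly.
    by rewrite pointwise // [X in _ - X]mulrC subrr mul0r.
  by move/eqP; rewrite mulf_eq0 (negPf Rn0) orbF => /eqP.
apply: (mulIf Rn0); move/eqP: P0; rewrite subr_eq0 => /eqP ->.
under eq_bigr do rewrite hc big_cons.
rewrite big_split /= -/Rp -[RHS]mulrA; congr (_ * _); exact: mulrC.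
Qed.
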